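(* Let $A\in\mathbb{R}^{K\times M}$, $\boldsymbol\beta\in\mathbb{R}^K$, $C>0$, with $\mathcal F_0=\{\mathbf w\in\mathbb{R}^M:A\mathbf w=\boldsymbol\beta,\ \mathbf 0\le\mathbf w\le C\mathbf 1\}$ nonempty. Let $\hat A_n,\hat{\boldsymbol\beta}_n$ be random with $\max_{i,j}|\hat A_{n,ij}-A_{ij}|=O_p(n^{-1/2})$ and $\|\hat{\boldsymbol\beta}_n-\boldsymbol\beta\|_\infty=O_p(n^{-1/2})$, let $\hat m_n=\min_{\mathbf 0\le\mathbf w\le C\mathbf 1}\|\hat A_n\mathbf w-\hat{\boldsymbol\beta}_n\|_\infty$, and for a deterministic sequence $\kappa_n>0$ let $\mathcal F_n=\{\mathbf w:\|\hat A_n\mathbf w-\hat{\boldsymbol\beta}_n\|_\infty\le\kappa_n/\sqrt n+\hat m_n,\ \mathbf 0\le\mathbf w\le C\mathbf 1\}$. Then: (i) if $\kappa_n\to\infty$ and $\kappa_n/\sqrt n\to0$, then $d_H(\mathcal F_n,\mathcal F_0)=O_p(\kappa_n/\sqrt n)$; (ii) if $A$ has full column rank and $\kappa_n$ is bounded, then $d_H(\mathcal F_n,\mathcal F_0)=O_p(n^{-1/2})$.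
   Context: For sets $S,T\subseteq\mathbb{R}^M$, the Hausdorff distance is $d_H(S,T)=\max\{\sup_{s\in S}\mathrm{dist}(s,T),\sup_{t\in T}\mathrm{dist}(t,S)\}$ with $\mathrm{dist}(u,T)=\inf_{v\in T}\|u-v\|_2$. $\|\cdot\|_\infty$ is the maximum absolute entry of a vector. *)

(* Defs.v *)
From HB Require Import structures.
From mathcomp Require Import all_boot all_order all_algebra.
From mathcomp Require Import all_classical all_reals all_analysis.
Set Implicit Arguments. Unset Strict Implicit. Unset Printing Implicit Defensive.
Import Order.TTheory GRing.Theory Num.Theory.
Import numFieldNormedType.Exports.
Local Open Scope classical_set_scope.
Local Open Scope ring_scope.

Section Defs.
Variable R : realType.

Definition vinfnorm (K : nat) (v : 'cV[R]_K) : R :=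
  \big[Num.max/0]_(i < K) `|v i ord0|.

Definition mmaxabs (K M : nat) (X : 'M[R]_(K, M)) : R :=
  \big[Num.max/0]_(ij : 'I_K * 'I_M) `|X ij.1 ij.2|.

Definition enorm (M : nat) (v : 'cV[R]_M) : R :=
  Num.sqrt (\sum_(i < M) v i ord0 ^+ 2).

Definition dist_set (M : nat) (u : 'cV[R]_M) (S : set 'cV[R]_M) : R :=
  inf [set enorm (u - v) | v in S].

(* Hausdorff distance (sets used are nonempty and bounded) *)
Definition hausdorff (M : nat) (S T : set 'cV[R]_M) : R :=
  Num.max (sup [set dist_set s T | s in S]) (sup [set dist_set t S | t in T]).

Definition box (M : nat) (C : R) : set 'cV[R]_M :=
  [set w | forall i, 0 <= w i ord0 <= C].

Definition F0 (K M : nat) (A : 'M[R]_(K, M)) (beta : 'cV[R]_K) (C : R)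
  : set 'cV[R]_M := [set w | A *m w = beta /\ box C w].

(* \hat m = min_{w in box} ||A w - b||_inf  (the min exists; written as inf) *)
Definition mhat (K M : nat) (A : 'M[R]_(K, M)) (b : 'cV[R]_K) (C : R) : R :=
  inf [set vinfnorm (A *m w - b) | w in box C].

Definition Fn (K M : nat) (Ah : 'M[R]_(K, M)) (bh : 'cV[R]_K) (C : R)
  (kappa : R) (n : nat) : set 'cV[R]_M :=
  [set w | vinfnorm (Ah *m w - bh) <= kappa / Num.sqrt n%:R + mhat Ah bh C
           /\ box C w].

End Defs.

(* Stochastic boundedness X_n = O_p(a_n), using outer probability
   (the bad event is required to be covered by a measurable set of small
   probability, so no measurability assumption on X_n is needed). *)
Definition bigOp (R : realType) (d : measure_display) (T : measurableType d)
  (P : probability T R) (X : nat -> T -> R) (a : nat -> R) : Prop :=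
  forall eps : R, 0 < eps -> exists Mb : R, exists N : nat,
    forall n : nat, (N <= n)%N ->
      exists E : set T, measurable E /\
        [set w | Mb * a n < `|X n w|] `<=` E /\ (P E < eps%:E)%E.

(* Main.v *)
Require Import Defs.
From HB Require Import structures.
From mathcomp Require Import all_boot all_order all_algebra.
From mathcomp Require Import all_classical all_reals all_analysis.
From mathcomp Require Import lra.
Import Order.TTheory GRing.Theory Num.Theory.
Import numFieldNormedType.Exports.
Local Open Scope classical_set_scope.
Local Open Scope ring_scope.
Set Implicit Arguments. Unset Strict Implicit.



Section VN.
Variable R : realType.

Lemma vn_ge0 K (v : 'cV[R]_K) : 0 <= vinfnorm v.
Proof. rewrite /vinfnorm; elim/big_ind: _ => //= x y hx hy; by rewrite le_max hx. Qed.

Lemma vn_le K (v : 'cV[R]_K) i : `|v i ord0| <= vinfnorm v.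
Proof. exact: (le_bigmax 0 (fun i => `|v i ord0|) i). Qed.

Lemma vn_leP K (v : 'cV[R]_K) c : 0 <= c -> (forall i, `|v i ord0| <= c) -> vinfnorm v <= c.
Proof. by move=> c0 h; apply/bigmax_leP; split. Qed.

Lemma vnN K (v : 'cV[R]_K) : vinfnorm (- v) = vinfnorm v.
Proof. by apply: eq_bigr => i _; rewrite mxE normrN. Qed.

Lemma vnD K (u v : 'cV[R]_K) : vinfnorm (u + v) <= vinfnorm u + vinfnorm v.
Proof.
apply: vn_leP; first by rewrite addr_ge0 // vn_ge0.
by move=> i; rewrite mxE (le_trans (ler_normD _ _)) // lerD // vn_le.
Qed.

Lemma vnZ K (v : 'cV[R]_K) t : 0 <= t -> vinfnorm (t *: v) <= t * vinfnorm v.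
Proof.
move=> t0; apply: vn_leP; first by rewrite mulr_ge0 // vn_ge0.
by move=> i; rewrite mxE normrM ger0_norm // ler_wpM2l // vn_le.
Qed.

Lemma argmin_ex (I : finType) (P : pred I) (F : I -> R) i0 :
  P i0 -> exists2 i, P i & forall j, P j -> F i <= F j.
Proof. by move=> Pi0; case: (arg_minP F Pi0) => i Pi hi; exists i. Qed.

End VN.



Section Hoff.
Variables (R : realType) (K M : nat) (A : 'M[R]_(K, M)).

Definition supp (v : 'cV[R]_M) : {set 'I_M} := finset (fun i => v i ord0 != 0).
Definition indep (v : 'cV[R]_M) := forall u : 'cV[R]_M,
  (forall i, v i ord0 = 0 -> u i ord0 = 0) -> A *m u = 0 -> u = 0.

Lemma set_bound (S : {set 'I_M}) : exists c : R, 0 <= c /\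
  ((forall u : 'cV[R]_M, (forall i, i \notin S -> u i ord0 = 0) -> A *m u = 0 -> u = 0) ->
   forall q : 'cV[R]_M, (forall i, i \notin S -> q i ord0 = 0) ->
     vinfnorm q <= c * vinfnorm (A *m q)).
Proof.
case: (pselect (forall u : 'cV[R]_M, (forall i, i \notin S -> u i ord0 = 0) ->
   A *m u = 0 -> u = 0)) => [hS|hS]; last by exists 0; split => // /hS.
pose D : 'M[R]_M := \matrix_(i, j) ((i == j) && (i \notin S))%:R.
pose X := col_mx A D.
have DE (u : 'cV[R]_M) i : (D *m u) i ord0 = (i \notin S)%:R * u i ord0.
  rewrite !mxE (bigD1 i) //= big1 ?addr0 ?mxE ?eqxx //.
  by move=> j ji; rewrite mxE eq_sym (negbTE ji) mul0r.
have kerX : kermx X^T = 0.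
  apply/row_matrixP => i; rewrite row0.
  set r := row i (kermx X^T).
  have hr : r *m X^T = 0 by rewrite /r -row_mul mulmx_ker row0.
  have : (r *m X^T)^T = 0 by rewrite hr trmx0.
  rewrite trmx_mul trmxK mul_col_mx => /eqP; rewrite col_mx_eq0 => /andP [/eqP h1 /eqP h2].
  have : r^T = 0.
    apply: hS => // j hj; move/matrixP: h2 => /(_ j ord0).
    by rewrite DE hj mxE /= mul1r => ->; rewrite ?mxE.
  by move/(congr1 trmx); rewrite trmxK trmx0.
have /row_freeP [B hB] : row_free X^T by rewrite -kermx_eq0 kerX.
have hG : B^T *m X = 1%:M.
  have : (X^T *m B)^T = 1%:M by rewrite hB trmx1.
  by rewrite trmx_mul trmxK.
pose Gl := lsubmx B^T; pose Gr := rsubmx B^T.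
have c0 : 0 <= \big[Num.max/0]_(i < M) \sum_(k < K) `|Gl i k|.
  elim/big_ind: _ => //= [x y hx hy|i _]; first by rewrite le_max hx.
  by apply: sumr_ge0 => k _.
exists (\big[Num.max/0]_(i < M) \sum_(k < K) `|Gl i k|); split => //.
move=> _ q hq.
have Dq : D *m q = 0.
  apply/matrixP => i j; rewrite (ord1 j) DE mxE.
  by case: (boolP (i \in S)) => [_|/hq->]; rewrite ?mul0r ?mulr0.
have qE : q = Gl *m (A *m q).
  have h : B^T *m X *m q = q by rewrite hG mul1mx.
  rewrite -[in LHS]h -(hsubmxK B^T) mul_row_col mulmxDl -!mulmxA Dq mulmx0 addr0.
  by [].
apply: vn_leP; first by rewrite mulr_ge0 ?vn_ge0.
move=> i; have -> : q i ord0 = (Gl *m (A *m q)) i ord0 by rewrite -qE.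
rewrite mxE.
apply: le_trans (ler_norm_sum _ _ _) _.
apply: (@le_trans _ _ ((\sum_(k < K) `|Gl i k|) * vinfnorm (A *m q))).
  rewrite mulr_suml; apply: ler_sum => k _; rewrite normrM ler_wpM2l // vn_le.
  by [].
apply: ler_wpM2r; first exact: vn_ge0.
exact: (le_bigmax 0 (fun i => \sum_(k < K) `|Gl i k|) i).
Qed.

Lemma indep_bound : exists L : R, 0 <= L /\
  forall q, indep q -> vinfnorm q <= L * vinfnorm (A *m q).
Proof.
have [f hf] := fin_all_exists set_bound.
exists (\big[Num.max/0]_(S : {set 'I_M}) f S); split.
  by elim/big_ind: _ => //= [x y hx hy|S _]; [rewrite le_max hx | case: (hf S)].
move=> q hq; have [f0 hfS] := hf (supp q).
have h1 : vinfnorm q <= f (supp q) * vinfnorm (A *m q).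
  apply: hfS => [u hu|i]; last by rewrite inE negbK => /eqP.
  apply: hq => i qi; apply: hu; by rewrite inE qi eqxx.
apply: le_trans h1 _; apply: ler_wpM2r; first exact: vn_ge0.
exact: (le_bigmax 0 (fun S => f S) (supp q)).
Qed.

End Hoff.



Section Hoff2.
Variables (R : realType) (K M : nat) (A : 'M[R]_(K, M)).

Definition sc (q d : 'cV[R]_M) := forall i, q i ord0 = 0 \/
  (0 < q i ord0 /\ 0 < d i ord0) \/ (q i ord0 < 0 /\ d i ord0 < 0).

Lemma sc_refl d : sc d d.
Proof.
move=> i; case: (ltrgtP (d i ord0) 0) => h; [right; right| right; left| left] => //.
Qed.

Lemma supp_in (q : 'cV[R]_M) i : (i \in supp q) = (q i ord0 != 0).
Proof. by rewrite inE. Qed.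

Lemma indep0 (q : 'cV[R]_M) : (#|supp q| <= 0)%N -> indep A q.
Proof.
move=> hn u hu _; apply/matrixP => i j; rewrite (ord1 j) mxE; apply: hu.
have : i \notin supp q by move: hn; rewrite leqn0 cards_eq0 => /eqP->; rewrite inE.
by rewrite supp_in negbK => /eqP.
Qed.

Lemma reduce_indep (d : 'cV[R]_M) b : forall n (q : 'cV[R]_M),
  (#|supp q| <= n)%N -> A *m q = b -> sc q d ->
  exists q', [/\ indep A q', A *m q' = b & sc q' d].
Proof.
elim=> [|n IH] q hn hq hsc; first by exists q; split => //; exact: indep0.
case: (pselect (indep A q)) => [hi|hni]; first by exists q.
have [u [hu hAu hu0]] : exists u : 'cV[R]_M,
    [/\ forall i, q i ord0 = 0 -> u i ord0 = 0, A *m u = 0 & u != 0].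
  case: (pselect (exists u : 'cV[R]_M,
    [/\ forall i, q i ord0 = 0 -> u i ord0 = 0, A *m u = 0 & u != 0])) => // hne.
  exfalso; apply: hni => u hu hAu; apply/eqP; apply/negPn/negP => hu0.
  by apply: hne; exists u.
have [i0 hi0] : exists i, u i ord0 != 0.
  case: (pselect (exists i, u i ord0 != 0)) => // hne; exfalso.
  move/eqP: hu0; apply; apply/matrixP => i j; rewrite (ord1 j) mxE.
  by apply/eqP; apply/negPn/negP => h; apply: hne; exists i.
have [i hi hmin] := argmin_ex (P := fun i => u i ord0 != 0)
  (fun i => `|q i ord0 / u i ord0|) hi0.
set t := q i ord0 / u i ord0.
set q' := q - t *: u.
have qi0 : q i ord0 != 0 by apply: contra hi => /eqP /hu /eqP.
have q'E j : q' j ord0 = q j ord0 - t * u j ord0 by rewrite !mxE.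
have key j : u j ord0 != 0 -> `|t * u j ord0| <= `|q j ord0|.
  move=> uj; rewrite normrM; have h := hmin j uj.
  apply: le_trans (ler_wpM2r (normr_ge0 _) h) _.
  by rewrite -normrM divfK.
apply: (IH q').
- have : supp q' \proper supp q.
    apply/properP; split.
      apply/fintype.subsetP => j; rewrite !supp_in; apply: contraNN => /eqP qj.
      by rewrite q'E qj (hu _ qj) mulr0 subr0.
    exists i; rewrite !supp_in // q'E /t divfK // subrr eqxx //.
  move/proper_card => h; rewrite -ltnS; exact: leq_trans h hn.
- by rewrite /q' mulmxBr -scalemxAr hAu scaler0 subr0.
- move=> j; rewrite q'E.
  case: (eqVneq (u j ord0) 0) => [->|uj]; first by rewrite mulr0 subr0; apply: hsc.
  have := key j uj; rewrite ler_norml => /andP [k1 k2].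
  have qj : q j ord0 != 0 by apply: contra uj => /eqP /hu /eqP.
  case: (hsc j) => [/eqP|[[q0 d0]|[q0 d0]]]; first by rewrite (negbTE qj).
  + rewrite gtr0_norm // in k1 k2.
    have h : 0 <= q j ord0 - t * u j ord0 by lra.
    case: (eqVneq (q j ord0 - t * u j ord0) 0) => [->|ne]; first by left.
    by right; left; split => //; rewrite lt_neqAle eq_sym ne h.
  + rewrite ltr0_norm // in k1 k2.
    have h : q j ord0 - t * u j ord0 <= 0 by lra.
    case: (eqVneq (q j ord0 - t * u j ord0) 0) => [->|ne]; first by left.
    by right; right; split => //; rewrite lt_neqAle ne h.
Qed.

End Hoff2.



Section Hoff3.
Variables (R : realType) (K M : nat) (A : 'M[R]_(K, M)).

Definition inb (p d : 'cV[R]_M) := forall i,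
  (0 <= p i ord0 <= d i ord0) \/ (d i ord0 <= p i ord0 <= 0).

Lemma conformal L : 0 <= L ->
  (forall q, indep A q -> vinfnorm q <= L * vinfnorm (A *m q)) ->
  forall n (d : 'cV[R]_M), (#|supp d| <= n)%N ->
  exists p, [/\ inb p d, A *m p = A *m d & vinfnorm p <= L * vinfnorm (A *m d)].
Proof.
move=> L0 hL; elim=> [|n IH] d hn.
  exists d; split => //; last exact/hL/indep0.
  by move=> i; case: (lerP 0 (d i ord0)) => h; [left|right]; rewrite lexx ?h ?(ltW h).
have [q [hqi hqA hqs]] := reduce_indep (A:=A) (d:=d) hn erefl (sc_refl d).
have hq := hL q hqi; rewrite hqA in hq.
case: (pselect (forall i, `|q i ord0| <= `|d i ord0|)) => [hle|hnle].
  exists q; split => // i; have := hle i.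
  case: (hqs i) => [->|[[q0 d0]|[q0 d0]]].
  - by case: (lerP 0 (d i ord0)) => h _; [left|right]; rewrite lexx ?h ?(ltW h).
  - by rewrite !gtr0_norm // => h; left; rewrite h ltW.
  - by rewrite !ltr0_norm // lerN2 => h; right; rewrite h ltW.
have [j0 hj0] : exists j, `|d j ord0| < `|q j ord0|.
  case: (pselect (exists j, `|d j ord0| < `|q j ord0|)) => // hne; exfalso.
  by apply: hnle => i; rewrite leNgt; apply/negP => h; apply: hne; exists i.
have qj0 : q j0 ord0 != 0.
  by rewrite -normr_gt0; apply: le_lt_trans hj0.
have [i hi hmin] := argmin_ex (P := fun i => q i ord0 != 0)
  (fun i => d i ord0 / q i ord0) qj0.
set t := d i ord0 / q i ord0.
have ratio_pos j : q j ord0 != 0 -> 0 < d j ord0 / q j ord0.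
  move=> qj; case: (hqs j) => [/eqP|[[q0 d0]|[q0 d0]]]; first by rewrite (negbTE qj).
  - exact: divr_gt0.
  - by rewrite -divrNN divr_gt0 // oppr_gt0.
have t0 : 0 < t := ratio_pos i hi.
have t1 : t < 1.
  apply: le_lt_trans (hmin j0 qj0) _.
  case: (hqs j0) => [/eqP|[[q0 d0]|[q0 d0]]]; first by rewrite (negbTE qj0).
  - by rewrite ltr_pdivrMr // mul1r -(gtr0_norm q0) -(gtr0_norm d0).
  - by rewrite ltr_ndivrMr // mul1r -(opprK (q j0 ord0)) -(opprK (d j0 ord0)) ltrN2
       -(ltr0_norm q0) -(ltr0_norm d0).
have hb j : (0 <= t * q j ord0 <= d j ord0) \/ (d j ord0 <= t * q j ord0 <= 0).
  case: (hqs j) => [->|[[q0 d0]|[q0 d0]]].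
  - by rewrite mulr0; case: (lerP 0 (d j ord0)) => h; [left|right]; rewrite lexx ?h ?(ltW h).
  - have := hmin j (lt0r_neq0 q0); rewrite ler_pdivlMr // => h.
    by left; rewrite h mulr_ge0 // ltW.
  - have := hmin j (ltr0_neq0 q0); rewrite ler_ndivlMr // => h.
    by right; rewrite h pmulr_rle0 // ltW.
set d' := d - t *: q.
have d'E j : d' j ord0 = d j ord0 - t * q j ord0 by rewrite !mxE.
have hsupp : (#|supp d'| <= n)%N.
  have : supp d' \proper supp d.
    apply/properP; split.
      apply/fintype.subsetP => j; rewrite !supp_in; apply: contraNN => /eqP dj.
      rewrite d'E dj; case: (hb j); rewrite dj => /andP [h1 h2];
        (have -> : t * q j ord0 = 0 by apply/eqP; rewrite eq_le h1 h2); by rewrite subrr.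
    exists i; last by rewrite supp_in negbK d'E /t divfK // subrr.
    rewrite supp_in; have := ratio_pos i hi; apply: contraTneq => ->.
    by rewrite mul0r ltxx.
  move/proper_card => h; rewrite -ltnS; exact: leq_trans h hn.
have [p' [hp'b hp'A hp'n]] := IH d' hsupp.
have Ad' : A *m d' = (1 - t) *: (A *m d).
  by rewrite /d' mulmxBr -scalemxAr hqA scalerBl scale1r.
exists (p' + t *: q); split.
- move=> j; rewrite !mxE; have := hp'b j; rewrite d'E; have := hb j.
  move=> [/andP[h1 h2]|/andP[h1 h2]] [/andP[h3 h4]|/andP[h3 h4]];
    [left|left|right|right]; apply/andP; split; lra.
- by rewrite mulmxDr -scalemxAr hp'A hqA Ad' -scalerDl subrK scale1r.
- apply: le_trans (vnD _ _) _.
  apply: le_trans (lerD hp'n (vnZ q (ltW t0))) _.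
  rewrite Ad'.
  have t1' : 0 <= 1 - t by rewrite subr_ge0 ltW.
  have h1 := vnZ (A *m d) t1'.
  have h2 : L * vinfnorm ((1 - t) *: (A *m d)) <= L * ((1 - t) * vinfnorm (A *m d)).
    exact: ler_wpM2l.
  have h3 : t * vinfnorm q <= t * (L * vinfnorm (A *m d)) by rewrite ler_wpM2l // ltW.
  lra.
Qed.

Lemma hoffman (beta : 'cV[R]_K) (C : R) : exists L : R, 0 <= L /\
  forall w0 x, box C w0 -> A *m w0 = beta -> box C x ->
  exists y, [/\ box C y, A *m y = beta &
    vinfnorm (x - y) <= L * vinfnorm (A *m x - beta)].
Proof.
have [L [L0 hL]] := indep_bound A.
exists L; split=> // w0 x hw0 hA hx.
have [p [hp hpA hpn]] := conformal L0 hL (leqnn #|supp (w0 - x)|).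
exists (x + p); split.
- move=> i; rewrite mxE; have := hp i; have := hw0 i; have := hx i; rewrite !mxE.
  move=> /andP[h1 h2] /andP[h3 h4] [/andP[h5 h6]|/andP[h5 h6]]; apply/andP; split; lra.
- by rewrite mulmxDr hpA mulmxBr hA addrC subrK.
- rewrite opprD addrA subrr add0r vnN.
  move: hpn; rewrite mulmxBr hA.
  have -> : beta - A *m x = - (A *m x - beta) by rewrite opprB.
  by rewrite vnN.
Qed.

End Hoff3.



Lemma bigOp_combine (R : realType) (d : measure_display) (T : measurableType d)
  (P : probability T R) (X1 X2 Y : nat -> T -> R) (s a : nat -> R) :
  bigOp P X1 s -> bigOp P X2 s ->
  (forall Ma Mb : R, exists Mc : R, exists N0 : nat, forall n, (N0 <= n)%N ->
     forall w, `|X1 n w| <= Ma * s n -> `|X2 n w| <= Mb * s n ->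
       `|Y n w| <= Mc * a n) ->
  bigOp P Y a.
Proof.
move=> h1 h2 hd eps eps0.
have e2 : 0 < eps / 2 by rewrite divr_gt0.
have [Ma [Na hA]] := h1 _ e2.
have [Mb [Nb hB]] := h2 _ e2.
have [Mc [N0 hC]] := hd Ma Mb.
exists Mc, (maxn N0 (maxn Na Nb)); move=> n hn.
have hn0 : (N0 <= n)%N by apply: leq_trans hn; rewrite leq_maxl.
have hna : (Na <= n)%N by apply: leq_trans hn; rewrite (leq_trans (leq_maxl Na Nb)) ?leq_maxr.
have hnb : (Nb <= n)%N by apply: leq_trans hn; rewrite (leq_trans (leq_maxr Na Nb)) ?leq_maxr.
have [Ea [mEa [sEa pEa]]] := hA n hna.
have [Eb [mEb [sEb pEb]]] := hB n hnb.
exists (Ea `|` Eb); split; first exact: measurableU.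
split.
- move=> w /= hw.
  case: (pselect (Ea w)) => [|nEa]; first by left.
  case: (pselect (Eb w)) => [|nEb]; first by right.
  exfalso.
  have k1 : `|X1 n w| <= Ma * s n.
    by rewrite leNgt; apply/negP => h; apply: nEa; apply: sEa.
  have k2 : `|X2 n w| <= Mb * s n.
    by rewrite leNgt; apply/negP => h; apply: nEb; apply: sEb.
  by have := hC n hn0 w k1 k2; rewrite leNgt hw.
- apply: (le_lt_trans (measureU2 P mEa mEb)).
  by rewrite [eps]splitr EFinD lteD.
Qed.

Section An.
Variable R : realType.

Lemma enorm_le M (v : 'cV[R]_M) : enorm v <= Num.sqrt M%:R * vinfnorm v.
Proof.
rewrite /enorm.
have h : \sum_(i < M) v i ord0 ^+ 2 <= M%:R * vinfnorm v ^+ 2.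
  apply: (@le_trans _ _ (\sum_(i < M) vinfnorm v ^+ 2)).
    apply: ler_sum => i _; have := vn_le v i; rewrite ler_norml => /andP [h1 h2].
    have := vn_ge0 v; nra.
  by rewrite sumr_const card_ord mulr_natl.
apply: le_trans (ler_wsqrtr h) _.
by rewrite sqrtrM // sqrtr_sqr ger0_norm // vn_ge0.
Qed.

Lemma enorm_ge0 M (v : 'cV[R]_M) : 0 <= enorm v.
Proof. exact: sqrtr_ge0. Qed.

Lemma enorm_sym M (u v : 'cV[R]_M) : enorm (u - v) = enorm (v - u).
Proof.
by rewrite /enorm; congr Num.sqrt; apply: eq_bigr => i _; rewrite !mxE -sqrrN opprB.
Qed.

Lemma enorm_self M (u : 'cV[R]_M) : enorm (u - u) = 0.
Proof.
apply/eqP; rewrite eq_le enorm_ge0 andbT.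
apply: le_trans (enorm_le _) _; rewrite subrr.
rewrite (_ : vinfnorm (0 : 'cV[R]_M) = 0) ?mulr0 //.
by apply/eqP; rewrite eq_le vn_ge0 andbT; apply: vn_leP => // i; rewrite mxE normr0.
Qed.

Lemma dist_le M (u : 'cV[R]_M) (S : set 'cV[R]_M) B :
  (exists2 t, S t & enorm (u - t) <= B) -> 0 <= dist_set u S <= B.
Proof.
move=> [t St ht]; rewrite /dist_set.
have ne : [set enorm (u - v) | v in S] !=set0 by exists (enorm (u - t)), t.
have lb : lbound [set enorm (u - v) | v in S] 0 by move=> _ [v _ <-]; exact: enorm_ge0.
apply/andP; split; first exact: lb_le_inf.
apply: le_trans ht; apply: ge_inf; first by exists 0.
by exists t.
Qed.

Lemma sup_le (X : set R) B : 0 <= B -> (forall x, X x -> 0 <= x <= B) -> 0 <= sup X <= B.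
Proof.
move=> B0 hX; case: (pselect (X !=set0)) => [[x Xx]|hne].
  apply/andP; split.
    apply: (@le_trans _ _ x); first by case/andP: (hX x Xx).
    apply: ub_le_sup => //; exists B => y /hX /andP [].
    by [].
  by apply: ge_sup; [exists x | move=> y /hX /andP []].
have -> : X = set0.
  by apply/seteqP; split => x // hx; exfalso; apply: hne; exists x.
by rewrite sup0 lexx.
Qed.

Lemma haus_le M (S T : set 'cV[R]_M) B : 0 <= B ->
  (forall s, S s -> exists2 t, T t & enorm (s - t) <= B) ->
  (forall t, T t -> exists2 s, S s & enorm (t - s) <= B) ->
  `|hausdorff S T| <= B.
Proof.
move=> B0 h1 h2; rewrite /hausdorff.
have /andP [a1 a2] : 0 <= sup [set dist_set s T | s in S] <= B.
  by apply: sup_le => // _ [s Ss <-]; apply: dist_le; apply: h1.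
have /andP [b1 b2] : 0 <= sup [set dist_set t S | t in T] <= B.
  by apply: sup_le => // _ [t Tt <-]; apply: dist_le; apply: h2.
rewrite ger0_norm; last by rewrite le_max a1.
by rewrite ge_max a2 b2.
Qed.

End An.



Section Pert.
Variable R : realType.

Lemma vn0 K : vinfnorm (0 : 'cV[R]_K) = 0.
Proof.
by apply/eqP; rewrite eq_le vn_ge0 andbT; apply: vn_leP => // i; rewrite mxE normr0.
Qed.

Lemma mm_le K M (X : 'M[R]_(K,M)) k j : `|X k j| <= mmaxabs X.
Proof. exact: (le_bigmax 0 (fun ij : 'I_K * 'I_M => `|X ij.1 ij.2|) (k, j)). Qed.

Lemma mm_ge0 K M (X : 'M[R]_(K,M)) : 0 <= mmaxabs X.
Proof. rewrite /mmaxabs; elim/big_ind: _ => //= x y hx hy; by rewrite le_max hx. Qed.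

Lemma mxbox_bound K M (X : 'M[R]_(K,M)) (w : 'cV[R]_M) C m :
  0 <= C -> box C w -> (forall k j, `|X k j| <= m) -> 0 <= m ->
  vinfnorm (X *m w) <= M%:R * C * m.
Proof.
move=> C0 hw hX m0.
apply: vn_leP => [|k]; first by rewrite !mulr_ge0.
rewrite mxE; apply: le_trans (ler_norm_sum _ _ _) _.
apply: (@le_trans _ _ (\sum_(j < M) (C * m))).
  apply: ler_sum => j _; rewrite normrM; have /andP [h1 h2] := hw j.
  by rewrite (ger0_norm h1) mulrC; apply: ler_pM.
by rewrite sumr_const card_ord -[(C * m) *+ M]mulr_natl mulrA.
Qed.

Lemma grp (V : zmodType) (a b c d : V) : a - c = (b - d) + ((a - b) - (c - d)).
Proof. by rewrite addrA (addrC (b - d)) !addrA subrK opprB addrA subrK. Qed.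

Definition err K M (A Ah : 'M[R]_(K,M)) (beta bh : 'cV[R]_K) C :=
  M%:R * C * mmaxabs (Ah - A) + vinfnorm (bh - beta).

Lemma pert K M (A Ah : 'M[R]_(K,M)) beta bh C w : 0 <= C -> box C w ->
  vinfnorm (Ah *m w - bh) <= vinfnorm (A *m w - beta) + err A Ah beta bh C /\
  vinfnorm (A *m w - beta) <= vinfnorm (Ah *m w - bh) + err A Ah beta bh C.
Proof.
move=> C0 hw; split.
- rewrite (grp (Ah *m w) (A *m w) bh beta) -mulmxBl.
  apply: le_trans (vnD _ _) _; rewrite lerD2l.
  apply: le_trans (vnD _ _) _; rewrite vnN; apply: lerD => //.
  apply: mxbox_bound => //; [exact: mm_le | exact: mm_ge0].
- rewrite (grp (A *m w) (Ah *m w) beta bh) -mulmxBl.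
  apply: le_trans (vnD _ _) _; rewrite lerD2l.
  apply: le_trans (vnD _ _) _; rewrite vnN.
  have -> : vinfnorm (beta - bh) = vinfnorm (bh - beta) by rewrite -vnN opprB.
  apply: lerD => //.
  apply: mxbox_bound => //; last exact: mm_ge0.
  move=> k j; rewrite !mxE distrC; have := mm_le (Ah - A) k j; by rewrite !mxE.
Qed.

Lemma err_ge0 K M (A Ah : 'M[R]_(K,M)) beta bh C : 0 <= C -> 0 <= err A Ah beta bh C.
Proof. by move=> C0; rewrite addr_ge0 ?vn_ge0 // !mulr_ge0 // mm_ge0. Qed.

Lemma mhat_le K M (Ah : 'M[R]_(K,M)) bh C (w : 'cV[R]_M) : box C w -> mhat Ah bh C <= vinfnorm (Ah *m w - bh).
Proof.
move=> hw; apply: ge_inf; last by exists w.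
by exists 0 => _ [v _ <-]; exact: vn_ge0.
Qed.

Lemma mhat_ge0 K M (Ah : 'M[R]_(K,M)) bh C (w : 'cV[R]_M) : box C w -> 0 <= mhat Ah bh C.
Proof.
move=> hw; apply: lb_le_inf; first by exists (vinfnorm (Ah *m w - bh)), w.
by move=> _ [v _ <-]; exact: vn_ge0.
Qed.

Lemma mhat_adh K M (Ah : 'M[R]_(K,M)) bh C (w : 'cV[R]_M) h : 0 < h -> box C w ->
  exists2 v, box C v & vinfnorm (Ah *m v - bh) < mhat Ah bh C + h.
Proof.
move=> h0 hw.
have hi : has_inf [set vinfnorm (Ah *m v - bh) | v in @box _ M C].
  split; first by exists (vinfnorm (Ah *m w - bh)), w.
  by exists 0 => _ [v _ <-]; exact: vn_ge0.
have [_ [v hv <-] hlt] := inf_adherent h0 hi.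
by exists v.
Qed.

Definition hoff_prop K M (A : 'M[R]_(K,M)) beta C L :=
  forall w0 x, box C w0 -> A *m w0 = beta -> box C x -> exists y, [/\ box C y, A *m y = beta &
    vinfnorm (x - y) <= L * vinfnorm (A *m x - beta)].

Lemma K1 K M (A Ah : 'M[R]_(K,M)) beta bh C (kap : R) n L w0 :
  0 <= C -> box C w0 -> A *m w0 = beta -> 0 <= L -> hoff_prop A beta C L ->
  forall s, Fn Ah bh C kap n s -> exists2 y, F0 A beta C y &
    enorm (s - y) <= Num.sqrt M%:R * L * (kap / Num.sqrt n%:R + 2 * err A Ah beta bh C).
Proof.
move=> C0 hw0 hA0 L0 hL s [hs1 hs2].
have [p1 _] := pert A Ah beta bh C0 hw0.
rewrite hA0 subrr vn0 add0r in p1.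
have m1 : mhat Ah bh C <= vinfnorm (Ah *m w0 - bh) by apply: mhat_le.
have [_ p2] := pert A Ah beta bh C0 hs2.
have [y [hy1 hy2 hy3]] := hL w0 s hw0 hA0 hs2.
exists y; first by split.
apply: le_trans (enorm_le _) _.
rewrite -mulrA ler_wpM2l ?sqrtr_ge0 //.
apply: le_trans hy3 _; rewrite ler_wpM2l //.
set e := err A Ah beta bh C in p1 p2 *; set h := kap / Num.sqrt n%:R in hs1 *.
lra.
Qed.

Lemma K2 K M (A Ah : 'M[R]_(K,M)) beta bh C (kap : R) n t :
  0 <= C -> err A Ah beta bh C <= kap / Num.sqrt n%:R ->
  F0 A beta C t -> Fn Ah bh C kap n t.
Proof.
move=> C0 he [ht1 ht2]; split => //.
have [p1 _] := pert A Ah beta bh C0 ht2.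
rewrite ht1 subrr vn0 add0r in p1.
have : 0 <= mhat Ah bh C by apply: mhat_ge0 ht2.
set e := err A Ah beta bh C in p1 he; set h := kap / Num.sqrt n%:R in he *.
lra.
Qed.

Lemma uniq_rank K M (A : 'M[R]_(K,M)) : \rank A = M -> forall u : 'cV[R]_M, A *m u = 0 -> u = 0.
Proof.
move=> hr u hu.
have rf : row_free A^T by rewrite /row_free mxrank_tr hr eqxx.
have : u^T *m A^T = 0 *m A^T by rewrite -trmx_mul hu trmx0 mul0mx.
move/(row_free_inj rf) => h.
by rewrite -(trmxK u) h trmx0.
Qed.

End Pert.

Unset Implicit Arguments. Set Strict Implicit.

Theorem lemma4 (R : realType) (d : measure_display) (T : measurableType d)
  (P : probability T R) (K M : nat) (A : 'M[R]_(K, M)) (beta : 'cV[R]_K)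
  (C : R) (Ahat : nat -> T -> 'M[R]_(K, M)) (betahat : nat -> T -> 'cV[R]_K)
  (kappa : nat -> R) :
  0 < C ->
  F0 A beta C !=set0 ->
  bigOp P (fun n w => mmaxabs (Ahat n w - A)) (fun n => (Num.sqrt n%:R)^-1) ->
  bigOp P (fun n w => vinfnorm (betahat n w - beta)) (fun n => (Num.sqrt n%:R)^-1) ->
  (forall n, 0 < kappa n) ->
  ((kappa n @[n --> \oo] --> +oo) ->
   (kappa n / Num.sqrt n%:R @[n --> \oo] --> 0) ->
   bigOp P (fun n w => hausdorff (Fn (Ahat n w) (betahat n w) C (kappa n) n)
                                 (F0 A beta C))
           (fun n => kappa n / Num.sqrt n%:R))
  /\
  (\rank A = M ->
   (exists B : R, forall n, kappa n <= B) ->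
   bigOp P (fun n w => hausdorff (Fn (Ahat n w) (betahat n w) C (kappa n) n)
                                 (F0 A beta C))
           (fun n => (Num.sqrt n%:R)^-1)).
Proof.
move=> C0 [w0 [hw0A hw0b]] hA hb kpos.
have C0' : 0 <= C := ltW C0.
have [L [L0 hL]] := hoffman A beta C.
have hL' : hoff_prop A beta C L by [].
have SM0 : 0 <= Num.sqrt (M%:R : R) := sqrtr_ge0 _.
have SL0 : 0 <= Num.sqrt (M%:R : R) * L by rewrite mulr_ge0.
have s0 n : 0 <= (Num.sqrt n%:R)^-1 :> R by rewrite invr_ge0 sqrtr_ge0.
have errb : forall (Ma Mb : R) n w,
   `|mmaxabs (Ahat n w - A)| <= Ma * (Num.sqrt n%:R)^-1 ->
   `|vinfnorm (betahat n w - beta)| <= Mb * (Num.sqrt n%:R)^-1 ->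
   err A (Ahat n w) beta (betahat n w) C <=
     (M%:R * C * `|Ma| + `|Mb|) * (Num.sqrt n%:R)^-1.
  move=> Ma Mb n w h1 h2; rewrite /err.
  have k1 := ler_norm (mmaxabs (Ahat n w - A)).
  have k2 := ler_norm (vinfnorm (betahat n w - beta)).
  have k3 := ler_wpM2r (s0 n) (ler_norm Ma).
  have k4 := ler_wpM2r (s0 n) (ler_norm Mb).
  have MC : 0 <= M%:R * C by rewrite mulr_ge0.
  have k5 : M%:R * C * mmaxabs (Ahat n w - A) <= M%:R * C * (`|Ma| * (Num.sqrt n%:R)^-1).
    by rewrite ler_wpM2l //; lra.
  set s := (Num.sqrt n%:R)^-1 in h1 h2 k3 k4 k5 *.
  rewrite mulrDl -mulrA; lra.
split.
- move=> kinf _.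
  apply: (bigOp_combine hA hb) => Ma Mb.
  set c0 := M%:R * C * `|Ma| + `|Mb|.
  have [N1 _ hN1] := (cvgryPge _).1 kinf c0.
  exists (Num.sqrt (M%:R : R) * L * 3), N1 => n hn w h1 h2 /=.
  have he := errb Ma Mb n w h1 h2.
  have hk : c0 <= kappa n := hN1 n hn.
  have hs := s0 n.
  have he' : err A (Ahat n w) beta (betahat n w) C <= kappa n / Num.sqrt n%:R.
    apply: le_trans he _; exact: ler_wpM2r.
  have h0 : 0 <= kappa n / Num.sqrt n%:R by rewrite mulr_ge0 // ltW.
  apply: haus_le.
  + by rewrite mulr_ge0 // mulr_ge0.
  + move=> s hsF.
    have [y hy1 hy2] := K1 C0' hw0b hw0A L0 hL' hsF.
    exists y => //; apply: le_trans hy2 _.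
    rewrite -[X in _ <= X]mulrA ler_wpM2l //; lra.
  + move=> t ht; exists t; first exact: K2 ht.
    by rewrite enorm_self mulr_ge0 // mulr_ge0.
- move=> hr [Bk hBk].
  apply: (bigOp_combine hA hb) => Ma Mb.
  set c0 := M%:R * C * `|Ma| + `|Mb|.
  exists (Num.sqrt (M%:R : R) * L * (`|Bk| + 2 * c0)), 1%N => n hn w h1 h2 /=.
  have he := errb Ma Mb n w h1 h2.
  have sp : 0 < (Num.sqrt n%:R)^-1 :> R by rewrite invr_gt0 sqrtr_gt0 ltr0n.
  have h0 : 0 < kappa n / Num.sqrt n%:R by rewrite mulr_gt0.
  have hk : kappa n / Num.sqrt n%:R <= `|Bk| * (Num.sqrt n%:R)^-1.
    by apply: ler_wpM2r; [exact: ltW | exact: le_trans (hBk n) (ler_norm Bk)].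
  have c00 : 0 <= c0 by rewrite /c0 addr_ge0 // !mulr_ge0.
  have bnd : Num.sqrt (M%:R : R) * L * (kappa n / Num.sqrt n%:R + 2 * err A (Ahat n w) beta (betahat n w) C)
      <= Num.sqrt (M%:R : R) * L * (`|Bk| + 2 * c0) * (Num.sqrt n%:R)^-1.
    rewrite -[X in _ <= X]mulrA ler_wpM2l //.
    set s := (Num.sqrt n%:R)^-1 in he hk *. rewrite /c0; lra.
  apply: haus_le.
  + apply: mulr_ge0; last exact: ltW. apply: mulr_ge0 => //. have := normr_ge0 Bk; lra.
  + move=> s hsF.
    have [y hy1 hy2] := K1 C0' hw0b hw0A L0 hL' hsF.
    by exists y => //; apply: le_trans hy2 _.
  + move=> t [ht1 ht2].
    have [v hv1 hv2] := mhat_adh (Ahat n w) (betahat n w) h0 hw0b.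
    have hvF : Fn (Ahat n w) (betahat n w) C (kappa n) n v.
      by split => //; rewrite [X in _ <= X]addrC ltW.
    have [y [hy1 hy2] hy3] := K1 C0' hw0b hw0A L0 hL' hvF.
    have ty : t = y.
      apply/eqP; rewrite -subr_eq0; apply/eqP; apply: (uniq_rank hr).
      by rewrite mulmxBr ht1 hy1 subrr.
    exists v => //; rewrite enorm_sym -ty in hy3.
    by apply: le_trans hy3 bnd.
Qed.
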